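(* Let $U_1,\dots,U_n$ be subsets of a set $X$, $\mathcal C=\mathrm{code}(\mathcal U,X)\subseteq2^{[n]}$, and $I_{\Gamma(\mathcal C)}$ the Stanley–Reisner ideal of the polar complex of $\mathcal C$. Then for $\sigma,\tau\subseteq[n]$, $$x^\sigma y^\tau\in I_{\Gamma(\mathcal C)}\iff\bigcap_{i\in\sigma}U_i\subseteq\bigcup_{j\in\tau}U_j,$$ with the conventions $\bigcap_{i\in\emptyset}U_i=X$ and $\bigcup_{j\in\emptyset}U_j=\emptyset$.
   Context: For $\sigma\subseteq[n]$ the atom is $A_\sigma=\bigl(\bigcap_{i\in\sigma}U_i\bigr)\setminus\bigcup_{j\notin\sigma}U_j$ (with $A_\emptyset=X\setminus\bigcup_iU_i$), and $\mathrm{code}(\mathcal U,X)=\{\sigma:A_\sigma\neq\emptyset\}$. The polar complex $\Gamma(\mathcal C)$ is the simplicial complex on $[n]\sqcup\{\bar1,\dots,\bar n\}$ consisting of all subsets of $\sigma\sqcup\{\bar i:i\in[n]\setminus\sigma\}$, $\sigma\in\mathcal C$. In $S=\mathbb F_2[x_1,\dots,x_n,y_1,\dots,y_n]$, with $x^\sigma=\prod_{i\in\sigma}x_i$ and $y^\tau=\prod_{j\in\tau}y_j$, the Stanley–Reisner ideal is $I_{\Gamma(\mathcal C)}=\langle x^\sigma y^\tau:\sigma\sqcup\{\bar j:j\in\tau\}\notin\Gamma(\mathcal C)\rangle$. *)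

(* Defs.v *)
From HB Require Import structures.
From mathcomp Require Import all_boot all_algebra.
From mathcomp Require Import multinomials.mpoly.
Set Implicit Arguments. Unset Strict Implicit. Unset Printing Implicit Defensive.
Import GRing.Theory.
Local Open Scope ring_scope.

Definition atom_nonempty (n : nat) (X : Type) (U : 'I_n -> X -> Prop)
  (sigma : {set 'I_n}) : Prop :=
  exists x : X, forall i : 'I_n, (i \in sigma) <-> U i x.

Definition code (n : nat) (X : Type) (U : 'I_n -> X -> Prop) : {set 'I_n} -> Prop :=
  atom_nonempty U.

(* vertex set [n] ⊔ {1bar,...,nbar}: inl i = i, inr j = jbar *)
Definition polar_vertices (n : nat) (sigma : {set 'I_n}) : {set 'I_n + 'I_n} :=
  [set inl i | i in sigma] :|: [set inr j | j in ~: sigma].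

Definition polar_face (n : nat) (C : {set 'I_n} -> Prop) (F : {set 'I_n + 'I_n}) : Prop :=
  exists sigma, C sigma /\ F \subset polar_vertices sigma.

Definition xy_set (n : nat) (sigma tau : {set 'I_n}) : {set 'I_n + 'I_n} :=
  [set inl i | i in sigma] :|: [set inr j | j in tau].

(* S = F_2[x_1..x_n, y_1..y_n]; x_i = 'X_(lshift n i), y_j = 'X_(rshift n j) *)
Definition S (n : nat) := {mpoly 'F_2[n + n]}.

Definition xy_mono (n : nat) (sigma tau : {set 'I_n}) : S n :=
  (\prod_(i in sigma) 'X_(lshift n i)) * (\prod_(j in tau) 'X_(rshift n j)).

Definition SR_gen (n : nat) (C : {set 'I_n} -> Prop) (p : S n) : Prop :=
  exists sigma tau : {set 'I_n},
    ~ polar_face C (xy_set sigma tau) /\ p = xy_mono sigma tau.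

Definition in_ideal_gen (R : comNzRingType) (G : R -> Prop) (p : R) : Prop :=
  exists s : seq (R * R), (forall q, q \in s -> G q.2) /\
    p = \sum_(q <- s) q.1 * q.2.

(* Main.v *)
Require Import Defs.
From HB Require Import structures.
From mathcomp Require Import all_boot all_algebra.
From mathcomp Require Import multinomials.mpoly.
From Stdlib Require Import ClassicalDescription.
Local Open Scope ring_scope.
Import GRing.Theory.

Theorem corollary6p8 (n : nat) (X : Type) (U : 'I_n -> X -> Prop)
    (sigma tau : {set 'I_n}) :
  in_ideal_gen (SR_gen (code U)) (xy_mono sigma tau) <->
  (forall x : X, (forall i, i \in sigma -> U i x) ->
     exists j, j \in tau /\ U j x).
Proof.
split.
- move=> [s [Hs Hp]] x Hsig.
  case: (classic (exists j, j \in tau /\ U j x)) => // Hno; exfalso.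
  pose s' : {set 'I_n} := [set i | is_left (excluded_middle_informative (U i x))].
  have s'E i : (i \in s') <-> U i x.
    rewrite inE; case: excluded_middle_informative => //=; split => //.
  pose v (k : 'I_(n + n)) : 'F_2 :=
    match split k with inl i => (i \in s')%:R | inr j => (j \notin s')%:R end.
  have vl i : v (lshift n i) = (i \in s')%:R.
    by rewrite /v (unsplitK (inl i)).
  have vr j : v (rshift n j) = (j \notin s')%:R.
    by rewrite /v (unsplitK (inr j)).
  have Hone : meval v (xy_mono sigma tau) = 1.
    rewrite /xy_mono mevalM !rmorph_prod /=.
    rewrite big1 ?mul1r; last first.
      by move=> i Hi; rewrite mevalXU vl; have /s'E -> := Hsig i Hi.
    rewrite big1 // => j Hj; rewrite mevalXU vr.
    case: (boolP (j \in s')) => //= /s'E Hj'.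
    by exfalso; apply: Hno; exists j.
  have Hzero : forall q, q \in s -> meval v q.2 = 0.
    move=> q /Hs [a [b [Hnf ->]]].
    case: (boolP [exists i in a, i \notin s']) => [/existsP [i /andP [Ha Hi]]|Ha].
      rewrite /xy_mono mevalM rmorph_prod /= (bigD1 i) //= mevalXU vl.
      by rewrite (negbTE Hi) !mul0r.
    case: (boolP [exists j in b, j \in s']) => [/existsP [j /andP [Hb Hj]]|Hb].
      rewrite /xy_mono mevalM !rmorph_prod /=.
      by rewrite [X in _ * X](bigD1 j) //= mevalXU vr Hj !mul0r mulr0.
    exfalso; apply: Hnf; exists s'; split.
      by exists x => i; rewrite s'E.
    apply/subsetP => k; rewrite /xy_set /polar_vertices !inE.
    case/orP => /imsetP [i Hi ->]; apply/orP.
      left; apply/imsetP; exists i => //.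
      by apply: contraNT Ha => Hn; apply/existsP; exists i; rewrite Hi.
    right; apply/imsetP; exists i => //; rewrite inE.
    by apply: contraNN Hb => Hn; apply/existsP; exists i; rewrite Hi.
  have : meval v (xy_mono sigma tau) = 0.
    rewrite Hp rmorph_sum /= big_seq big1 // => q Hq.
    by rewrite mevalM Hzero // mulr0.
  by rewrite Hone => /eqP; rewrite oner_eq0.
- move=> H; exists [:: (1, xy_mono sigma tau)]; split; last first.
    by rewrite big_seq1 mul1r.
  move=> q; rewrite inE => /eqP -> /=.
  exists sigma, tau; split => //.
  move=> [s' [[x Hx] Hsub]].
  have [j [Hj Ujx]] : exists j, j \in tau /\ U j x.
    apply: H => i Hi; apply/Hx.
    have : inl i \in polar_vertices s'.
      by apply: (subsetP Hsub); rewrite !inE; apply/orP; left; apply/imsetP; exists i.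
    rewrite !inE => /orP [/imsetP [i' Hi' [->]] //|/imsetP [? _ //]].
  have : inr j \in polar_vertices s'.
    by apply: (subsetP Hsub); rewrite !inE; apply/orP; right; apply/imsetP; exists j.
  rewrite !inE => /orP [/imsetP [? _ //]|/imsetP [j' Hj' [Ej]]].
  by move: Hj'; rewrite -Ej inE; move/Hx: Ujx => ->.
Qed.
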